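(* Let $A$ be a random variable with values in $\{u,v\}$, $\mathbb{P}(A=u)=p_u$, $\mathbb{P}(A=v)=p_v$, $p_u+p_v=1$, and let $(U,V)$ be a random vector independent of $A$ that is bivariate normal with means $\mu_u<0$, $\mu_v<0$, standard deviations $\sigma_u,\sigma_v>0$, and correlation $\rho$. For $z_u,z_v\in\mathbb{R}$ let \[g(z_u,z_v)=p_u\,\mathbb{P}(U>z_u)\,\mathbb{E}[U+V\mid U>z_u]+p_v\,\mathbb{P}(V>z_v)\,\mathbb{E}[U+V\mid V>z_v].\] Define \[\rho_1=\left[\left(\frac{-\mu_u}{\sigma_u}\right)M\left(\frac{-\mu_u}{\sigma_u}\right)\left(1+\frac{\mu_v}{\mu_u}\right)-1\right]\frac{\sigma_u}{\sigma_v},\qquad \rho_2=\left[\left(\frac{-\mu_v}{\sigma_v}\right)M\left(\frac{-\mu_v}{\sigma_v}\right)\left(1+\frac{\mu_u}{\mu_v}\right)-1\right]\frac{\sigma_v}{\sigma_u}.\] If $-1\le\rho<\min(\rho_1,\rho_2)$, then $g(0,0)<0$.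
   Context: $\phi,\Phi$ are the standard normal density and CDF and $M(\alpha)=(1-\Phi(\alpha))/\phi(\alpha)$ is the Mills ratio. $g(z_u,z_v)=\mathbb{E}[D(U+V)]$ with $D=\mathbb{I}(A=u,U>z_u)+\mathbb{I}(A=v,V>z_v)$ is the long-run average overall performance when innovations with primary dimension $u$ (resp. $v$) are adopted iff their effect exceeds the hurdle $z_u$ (resp. $z_v$). *)

(* Defs.v *)
From HB Require Import structures.
From mathcomp Require Import all_boot all_order all_algebra.
From mathcomp Require Import all_classical all_reals all_analysis.
Set Implicit Arguments. Unset Strict Implicit. Unset Printing Implicit Defensive.
Import Order.TTheory GRing.Theory Num.Theory.
Import numFieldNormedType.Exports.
Local Open Scope classical_set_scope.
Local Open Scope ring_scope.

Section defs.
Context {R : realType}.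

Definition phi (x : R) : R := normal_pdf 0 1 x.
Definition Phi (a : R) : R := fine (normal_prob 0 1 `]-oo, a]).
Definition Mills (a : R) : R := (1 - Phi a) / phi a.

Definition std_normal2 := (@normal_prob R 0 1 \x @normal_prob R 0 1)%E.

(* canonical model of a bivariate normal (U,V) with means mu_u, mu_v,
   standard deviations s_u, s_v and correlation rho (|rho| <= 1):
   U = mu_u + s_u Z1,  V = mu_v + s_v (rho Z1 + sqrt(1 - rho^2) Z2). *)
Definition bnU (mu_u s_u : R) (z : R * R) : R := mu_u + s_u * z.1.
Definition bnV (mu_v s_v rho : R) (z : R * R) : R :=
  mu_v + s_v * (rho * z.1 + Num.sqrt (1 - rho ^+ 2) * z.2).

(* g(z_u,z_v) = p_u E[(U+V) 1{U > z_u}] + p_v E[(U+V) 1{V > z_v}]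
   (= p_u P(U>z_u) E[U+V | U>z_u] + p_v P(V>z_v) E[U+V | V>z_v]) *)
Definition perf_g (p_u p_v mu_u mu_v s_u s_v rho z_u z_v : R) : \bar R :=
  ((p_u%:E * \int[std_normal2]_(z in [set z | (z_u < bnU mu_u s_u z)%R])
       (bnU mu_u s_u z + bnV mu_v s_v rho z)%:E)
 + (p_v%:E * \int[std_normal2]_(z in [set z | (z_v < bnV mu_v s_v rho z)%R])
       (bnU mu_u s_u z + bnV mu_v s_v rho z)%:E))%E.

Definition rho1 (mu_u mu_v s_u s_v : R) : R :=
  ((- mu_u / s_u) * Mills (- mu_u / s_u) * (1 + mu_v / mu_u) - 1) * (s_u / s_v).
Definition rho2 (mu_u mu_v s_u s_v : R) : R :=
  ((- mu_v / s_v) * Mills (- mu_v / s_v) * (1 + mu_u / mu_v) - 1) * (s_v / s_u).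

End defs.

(* Main.v *)
Require Import Defs.
From HB Require Import structures.
From mathcomp Require Import all_boot all_order all_algebra.
From mathcomp Require Import all_classical all_reals all_analysis.
From mathcomp Require Import measurable_realfun lebesgue_measure lebesgue_integral.
From mathcomp Require Import ring lra.
Import Order.TTheory GRing.Theory Num.Theory.
Import numFieldNormedType.Exports.
Local Open Scope classical_set_scope.
Local Open Scope ring_scope.
Set Implicit Arguments. Unset Strict Implicit. Unset Printing Implicit Defensive.
Section S.
Variable R : realType.
Local Notation mu := (@lebesgue_measure R).
Local Open Scope ereal_scope.
Definition sh (t : R) : measurableTypeR R -> measurableTypeR R := fun x => (x + t)%R.
Lemma mt_sh (t : R) : measurable_fun setT (sh t).
Proof. by apply: measurable_funD. Qed.
Definition shmeas (t : R) : measure (measurableTypeR R) R.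
refine (pushforward mu (sh t) : measure _ _). exact: mt_sh. Defined.

Lemma lebT (t : R) (f : R -> \bar R) : measurable_fun [set: R] f -> (forall x, 0 <= f x) ->
  \int[mu]_x f (x + t)%R = \int[mu]_x f x.
Proof.
move=> mf f0.
transitivity (\int[shmeas t]_x f x).
  by rewrite /shmeas /= ge0_integral_pushforward //; exact: mt_sh.
apply: (@eq_measure_integral _ _ _ setT mu (shmeas t)).
move=> A mA _.
symmetry; apply: (@lebesgue_measure_unique R (shmeas t)) => //.
move=> _ [[a b] _ <-] /=.
rewrite /pushforward.
have -> : (sh t) @^-1` `]a, b] = `](a - t)%R, (b - t)%R]%classic.
  apply/seteqP; split => x /=; rewrite /sh !in_itv /=; 
    move=> /andP[h1 h2]; apply/andP; split; lra.
rewrite !lebesgue_measure_itv /= !lte_fin.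
have -> : (a - t < b - t)%R = (a < b)%R by rewrite ltrBlDr subrK.
case: ifP => // _; congr (_%:E); ring.
Qed.

Local Notation RR := (measurableTypeR R * measurableTypeR R)%type.

Lemma shear1 (k : R) (f : RR -> \bar R) : measurable_fun [set: RR] f -> (forall z, 0 <= f z) ->
  \int[mu \x mu]_z f ((z.1 + k * z.2)%R, z.2) = \int[mu \x mu]_z f z.
Proof.
move=> mf f0.
have mS : measurable_fun [set: RR] (fun z : RR => (((z.1 + k * z.2)%R : measurableTypeR R), z.2)).
  apply/measurable_fun_pairP; split => /=.
    by apply: measurable_funD; [exact: measurable_fst| apply: measurable_funM => //; exact: measurable_snd].
  exact: measurable_snd.
rewrite fubini_tonelli2 //; last exact: measurableT_comp.
rewrite [RHS]fubini_tonelli2 //.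
apply: eq_integral => y _ /=; rewrite /fubini_G /=.
apply: (lebT (k * y)%R (f := fun x => f (x, y))) => //.
exact: measurable_fun_pair1.
Qed.

Lemma shear2 (k : R) (f : RR -> \bar R) : measurable_fun [set: RR] f -> (forall z, 0 <= f z) ->
  \int[mu \x mu]_z f (z.1, (z.2 + k * z.1)%R) = \int[mu \x mu]_z f z.
Proof.
move=> mf f0.
have mS : measurable_fun [set: RR] (fun z : RR => (z.1, ((z.2 + k * z.1)%R : measurableTypeR R))).
  apply/measurable_fun_pairP; split => /=.
    exact: measurable_fst.
  by apply: measurable_funD; [exact: measurable_snd| apply: measurable_funM => //; exact: measurable_fst].
rewrite fubini_tonelli1 //; last exact: measurableT_comp.
rewrite [RHS]fubini_tonelli1 //.
apply: eq_integral => x _ /=; rewrite /fubini_F /=.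
apply: (lebT (k * x)%R (f := fun y => f (x, y))) => //.
exact: measurable_fun_pair2.
Qed.

Definition S1 (k : R) (z : RR) : RR := (((z.1 + k * z.2)%R : measurableTypeR R), z.2).
Definition S2 (k : R) (z : RR) : RR := (z.1, ((z.2 + k * z.1)%R : measurableTypeR R)).
Lemma mS1 k : measurable_fun [set: RR] (S1 k).
Proof.
apply/measurable_fun_pairP; split => /=.
  by apply: measurable_funD; [exact: measurable_fst| apply: measurable_funM => //; exact: measurable_snd].
exact: measurable_snd.
Qed.
Lemma mS2 k : measurable_fun [set: RR] (S2 k).
Proof.
apply/measurable_fun_pairP; split => /=.
  exact: measurable_fst.
by apply: measurable_funD; [exact: measurable_snd| apply: measurable_funM => //; exact: measurable_fst].
Qed.

Definition rot (r c : R) (z : RR) : RR :=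
  (((r * z.1 + c * z.2)%R : measurableTypeR R), ((- c * z.1 + r * z.2)%R : measurableTypeR R)).

Lemma rotL (r c : R) (f : RR -> \bar R) : (r ^+ 2 + c ^+ 2 = 1)%R -> c != 0%R ->
  measurable_fun [set: RR] f -> (forall z, 0 <= f z) ->
  \int[mu \x mu]_z f (rot r c z) = \int[mu \x mu]_z f z.
Proof.
move=> rc c0 mf f0.
pose k := ((1 - r) / c)%R; pose l := (- c)%R.
have hkc : (k * c = 1 - r)%R by rewrite /k mulrAC -mulrA divff // mulr1.
have hk : (k * (1 + r) = c)%R.
  apply: (mulIf c0); rewrite mulrAC hkc.
  have -> : ((1 - r) * (1 + r) = 1 - r ^+ 2)%R by ring.
  by rewrite -rc; ring.
have E : forall z, rot r c z = S1 k (S2 l (S1 k z)).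
  move=> [z1 z2]; rewrite /rot /S1 /S2 /l /=; congr pair.
    transitivity (r * z1 + (k * (1 + r)) * z2)%R; first by rewrite hk.
    transitivity (z1 + 2 * k * z2 - (k * c) * z1 - k * (k * c) * z2)%R; last by ring.
    by rewrite hkc; ring.
  transitivity (- c * z1 + (1 - k * c) * z2)%R; first by rewrite hkc; ring.
  ring.
under eq_integral do rewrite E.
have g1m : measurable_fun [set: RR] (f \o S1 k) by exact: measurableT_comp (mS1 k).
have g2m : measurable_fun [set: RR] ((f \o S1 k) \o S2 l) by exact: measurableT_comp (mS2 l).
transitivity (\int[mu \x mu]_z ((f \o S1 k) \o S2 l) z).
  exact: (shear1 k g2m (fun z => f0 _)).
transitivity (\int[mu \x mu]_z (f \o S1 k) z).
  exact: (shear2 l g1m (fun z => f0 _)).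
exact: (shear1 k mf f0).
Qed.

Local Notation N := (@normal_prob R 0 1).
Local Notation ph := (@normal_pdf R 0 1).

Lemma dens (f : R -> \bar R) : measurable_fun [set: R] f -> (forall x, 0 <= f x) ->
  \int[N]_x f x = \int[mu]_x (f x * (ph x)%:E).
Proof.
move=> mf f0.
have Nmu : N `<< mu := normal_prob_dominates 0 1.
rewrite -(Radon_Nikodym_SigmaFinite.change_of_variables Nmu f0) //.
apply: ae_eq_integral => //.
- apply: emeasurable_funM => //.
  exact: measurable_int (Radon_Nikodym_SigmaFinite.f_integrable Nmu).
- apply: emeasurable_funM => //.
  apply/measurable_EFinP; exact: measurable_normal_pdf.
- apply: ae_eqe_mul2l.
  apply: integral_ae_eq => //.
  + exact: Radon_Nikodym_SigmaFinite.f_integrable.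
  + apply/measurable_EFinP; exact: measurable_normal_pdf.
  + move=> E _ mE.
    by rewrite -Radon_Nikodym_SigmaFinite.f_integral.
Qed.

Lemma mph : measurable_fun [set: R] ph.
Proof. exact: measurable_normal_pdf. Qed.

Definition ph2 (z : RR) : R := (ph z.1 * ph z.2)%R.
Lemma mph2 : measurable_fun [set: RR] ph2.
Proof.
apply: measurable_funM.
  exact: measurableT_comp mph measurable_fst.
exact: measurableT_comp mph measurable_snd.
Qed.
Lemma ph2_ge0 z : (0 <= ph2 z)%R.
Proof. by rewrite mulr_ge0 // normal_pdf_ge0. Qed.

Lemma dens2 (f : RR -> \bar R) : measurable_fun [set: RR] f -> (forall z, 0 <= f z) ->
  \int[N \x N]_z f z = \int[mu \x mu]_z (f z * (ph2 z)%:E).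
Proof.
move=> mf f0.
have mg : measurable_fun [set: RR] (fun z => f z * (ph2 z)%:E).
  apply: emeasurable_funM => //; apply/measurable_EFinP; exact: mph2.
have g0 : forall z, 0 <= f z * (ph2 z)%:E.
  by move=> z; apply: mule_ge0 => //; rewrite lee_fin ph2_ge0.
rewrite fubini_tonelli1 // [RHS]fubini_tonelli1 //.
rewrite /fubini_F /=.
transitivity (\int[N]_x \int[mu]_y (f (x, y) * (ph y)%:E)).
  apply: eq_integral => x _; apply: dens => //.
  exact: measurable_fun_pair2.
have mF : measurable_fun [set: R] (fun x => \int[mu]_y (f (x, y) * (ph y)%:E)).
  have := @measurable_fun_fubini_tonelli_F _ _ _ _ _ mu (fun z : RR => f z * (ph z.2)%:E).
  apply.
    apply: emeasurable_funM => //; apply/measurable_EFinP.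
    exact: measurableT_comp mph measurable_snd.
  by move=> z; apply: mule_ge0 => //; rewrite lee_fin normal_pdf_ge0.
rewrite dens //; last first.
  by move=> x; apply: integral_ge0 => y _; apply: mule_ge0 => //; rewrite lee_fin normal_pdf_ge0.
apply: eq_integral => x _.
rewrite -ge0_integralZr //; last 3 first.
- apply: emeasurable_funM; first exact: measurable_fun_pair2.
  by apply/measurable_EFinP; exact: mph.
- by move=> y _; apply: mule_ge0 => //; rewrite lee_fin normal_pdf_ge0.
- by rewrite lee_fin normal_pdf_ge0.
apply: eq_integral => y _.
by rewrite /ph2 /= -muleA -EFinM mulrC.
Qed.

Lemma ph2_rot r c z : (r ^+ 2 + c ^+ 2 = 1)%R -> ph2 (rot r c z) = ph2 z.
Proof.
move=> rc; rewrite /ph2 /rot /normal_pdf /= oner_eq0 /=.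
rewrite mulrACA [in RHS]mulrACA; congr (_ * _)%R.
rewrite /normal_fun -!expRD; congr expR.
rewrite !subr0 expr1n.
transitivity (- ((r * z.1 + c * z.2) ^+ 2 + (- c * z.1 + r * z.2) ^+ 2) / 2)%R; first by ring.
have -> : ((r * z.1 + c * z.2) ^+ 2 + (- c * z.1 + r * z.2) ^+ 2 = (r ^+ 2 + c ^+ 2) * (z.1 ^+ 2 + z.2 ^+ 2))%R by ring.
rewrite rc mul1r; ring.
Qed.

Lemma mrot r c : measurable_fun [set: RR] (rot r c).
Proof.
apply/measurable_fun_pairP; split => /=.
  by apply: measurable_funD; apply: measurable_funM => //; try exact: measurable_fst; exact: measurable_snd.
by apply: measurable_funD; apply: measurable_funM => //; try exact: measurable_fst; exact: measurable_snd.
Qed.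

Lemma rotN0 r c (f : RR -> \bar R) : (r ^+ 2 + c ^+ 2 = 1)%R -> c != 0%R ->
  measurable_fun [set: RR] f -> (forall z, 0 <= f z) ->
  \int[N \x N]_z f (rot r c z) = \int[N \x N]_z f z.
Proof.
move=> rc c0 mf f0.
have mfr : measurable_fun [set: RR] (f \o rot r c) by exact: measurableT_comp (mrot r c).
rewrite (dens2 mfr) ?dens2 //; last by move=> z; exact: f0.
have mg : measurable_fun [set: RR] (fun z => f z * (ph2 z)%:E).
  apply: emeasurable_funM => //; apply/measurable_EFinP; exact: mph2.
have g0 : forall z, 0 <= f z * (ph2 z)%:E.
  by move=> z; apply: mule_ge0 => //; rewrite lee_fin ph2_ge0.
rewrite -(rotL rc c0 mg g0).
by apply: eq_integral => z _ /=; rewrite ph2_rot.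
Qed.

Lemma rot_id z : rot 1 0 z = z.
Proof. by case: z => a b; rewrite /rot /=; congr pair; ring. Qed.

Lemma rot_neg z : rot (-1) 0 z = rot 0 1 (rot 0 1 z).
Proof. by case: z => a b; rewrite /rot /=; congr pair; ring. Qed.

Lemma rotN r c (f : RR -> \bar R) : (r ^+ 2 + c ^+ 2 = 1)%R ->
  measurable_fun [set: RR] f -> (forall z, 0 <= f z) ->
  \int[N \x N]_z f (rot r c z) = \int[N \x N]_z f z.
Proof.
move=> rc mf f0.
have [c0|c0] := eqVneq c 0%R; last exact: rotN0.
subst c.
have r2 : (r ^+ 2 = 1)%R by move: rc; rewrite expr0n /= addr0.
have : ((r - 1) * (r + 1) = 0)%R.
  transitivity (r ^+ 2 - 1)%R; first by ring.
  by rewrite r2 subrr.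
move/eqP; rewrite mulf_eq0 => /orP[|] /eqP h.
  have -> : r = 1%R by apply/eqP; rewrite -subr_eq0 h.
  by under eq_integral do rewrite rot_id.
have -> : r = (-1)%R by apply/eqP; rewrite -addr_eq0 h.
under eq_integral do rewrite rot_neg.
have h01 : ((0:R) ^+ 2 + 1 ^+ 2 = 1)%R by rewrite expr0n /= add0r expr1n.
have mfr : measurable_fun [set: RR] (f \o rot 0 1) by exact: measurableT_comp (mrot 0 1).
have o1 : (1:R)%R != 0%R by exact: oner_neq0.
rewrite (rotN0 (f := f \o rot 0 1) h01 o1 mfr); last by move=> z; exact: f0.
exact: rotN0 h01 o1 mf f0.
Qed.

Lemma rotI r c (f : RR -> \bar R) : (r ^+ 2 + c ^+ 2 = 1)%R ->
  measurable_fun [set: RR] f ->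
  \int[N \x N]_z f (rot r c z) = \int[N \x N]_z f z.
Proof.
move=> rc mf.
rewrite integralE [RHS]integralE.
have -> : (fun z => f (rot r c z))^\+ = f^\+ \o rot r c by exact: (funepos_comp f (rot r c)).
have -> : (fun z => f (rot r c z))^\- = f^\- \o rot r c by exact: (funeneg_comp f (rot r c)).
rewrite (rotN (f := f^\+)) //; last exact: measurable_funepos.
rewrite (rotN (f := f^\-)) //; exact: measurable_funeneg.
Qed.

Local Open Scope ring_scope.
Lemma is_derive_expRc (g : R -> R) (x dg : R) : is_derive x 1 g dg ->
  is_derive x 1 (fun y => expR (g y)) (expR (g x) * dg).
Proof.
move=> hg.
have dg1 : derivable g x 1 by exact: ex_derive.
have de : derivable (fun y => expR (g y)) x 1.
  apply/derivable1_diffP.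
  apply: (@differentiable_comp _ _ _ _ g expR).
    exact/derivable1_diffP.
  by apply/derivable1_diffP; exact: derivable_expR.
apply: (is_derive_eq (derivableP de)).
have de2 : derivable expR (g x) 1 by exact: derivable_expR.
rewrite -derive1E (derive1_comp dg1 de2).
by rewrite !derive1E !derive_val.
Qed.

Definition gk (x : R) : R := expR (- (x ^+ 2 / 2)).
Lemma phE (x : R) : ph x = normal_peak 1 * gk x.
Proof.
rewrite /normal_pdf oner_eq0 /= /normal_fun /gk subr0 expr1n.
by rewrite mulNr.
Qed.

Lemma is_derive_gk (x : R) : is_derive x 1 gk (- x * gk x).
Proof.
rewrite /gk mulrC.
apply: is_derive_expRc.
pose p : {poly R} := (- 2^-1)%:P * 'X^2.
have -> : (fun y : R => - (y ^+ 2 / 2)) = horner p.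
  by apply/funext => y; rewrite /p !hornerE /=; ring.
apply: is_derive_eq.
rewrite /p derivM derivC mul0r add0r derivXn !hornerE /=.
have h2 : (2 : R) != 0 by rewrite pnatr_eq0.
by field.
Qed.

Lemma is_derive_Fph (x : R) : is_derive x 1 (fun y => - ph y) (x * ph x).
Proof.
have -> : (fun y => - ph y) = (- normal_peak 1 : R) *: gk.
  by apply/funext => y; rewrite phE /= -mulNr.
have H := is_derive_gk x.
apply: is_derive_eq.
rewrite /= phE.
change (- normal_peak 1 * (- x * gk x) = x * (normal_peak 1 * gk x)).
ring.
Qed.

Lemma cph : continuous ph.
Proof. by apply: continuous_normal_pdf; exact: oner_neq0. Qed.

Lemma gk_cvg : gk x @[x --> +oo] --> (0:R).
Proof.
apply: (cvg_comp (fun x => x ^+ 2 / 2) (fun x => expR (- x))); last exact: cvgr_expR.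
apply: gt0_cvgMly; first by rewrite invr_gt0.
exact: cvgr_expr2.
Qed.

Lemma intxph (a : R) : 0 <= a ->
  (\int[mu]_(x in `[a, +oo[) ((x * ph x)%:E) = (ph a)%:E)%E.
Proof.
move=> a0.
rewrite (@ge0_continuous_FTC2y R (fun x => x * ph x) (fun x => - ph x) a 0).
- by rewrite sub0e; congr (_%:E); rewrite opprK.
- by move=> x ax; rewrite mulr_ge0 ?normal_pdf_ge0 // (le_trans a0 ax).
- apply: continuous_subspaceT => x.
  apply: cvgM; [exact: cvg_id| exact: cph].
- rewrite -oppr0; apply: cvgN.
  rewrite oppr0 (_ : normal_pdf 0 1 = fun x => normal_peak 1 * gk x); last first.
    by apply/funext => y; rewrite -phE.
  rewrite -(mulr0 (normal_peak 1 : R)); apply: cvgMr.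
  exact: gk_cvg.
- by move=> x _; have H := is_derive_Fph x; exact: ex_derive.
- apply: cvg_at_right_filter; apply: cvgN; exact: cph.
- by move=> x _; have H := is_derive_Fph x; rewrite derive1E derive_val.
Qed.

Local Open Scope ereal_scope.
Definition ng : measurableTypeR R -> measurableTypeR R := fun x => (- x)%R.
Lemma mt_ng : measurable_fun setT ng.
Proof. exact: measurableT_comp. Qed.
Definition ngmeas : measure (measurableTypeR R) R.
refine (pushforward mu ng : measure _ _). exact: mt_ng. Defined.

Lemma lebN (f : R -> \bar R) : measurable_fun [set: R] f -> (forall x, 0 <= f x) ->
  \int[mu]_x f (- x)%R = \int[mu]_x f x.
Proof.
move=> mf f0.
transitivity (\int[ngmeas]_x f x).
  by rewrite /ngmeas /= ge0_integral_pushforward //; exact: mt_ng.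
apply: (@eq_measure_integral _ _ _ setT mu ngmeas).
move=> A mA _.
symmetry; apply: (@lebesgue_measure_unique R ngmeas) => //.
move=> _ [[a b] _ <-] /=.
rewrite /pushforward.
have -> : ng @^-1` `]a, b] = `[(- b)%R, (- a)%R[%classic.
  apply/seteqP; split => x /=; rewrite /ng !in_itv /=;
    move=> /andP[h1 h2]; apply/andP; split; lra.
rewrite !lebesgue_measure_itv /= !lte_fin.
have -> : (- b < - a)%R = (a < b)%R by rewrite ltrN2.
case: ifP => // _; congr (_%:E); ring.
Qed.

Lemma mu_pos : \int[mu]_x (((fun x : R => x%:E)^\+ x) * (ph x)%:E) = (ph 0)%:E.
Proof.
rewrite -(intxph (lexx 0%R)) [RHS]integral_mkcond.
apply: eq_integral => x _; rewrite patchE funeposE /=.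
case: ifPn => [/set_mem|/negP xn].
  rewrite /= in_itv /= andbT => x0.
  by rewrite max_l ?lee_fin // EFinM.
have x0 : (x < 0)%R.
  rewrite ltNge; apply/negP => x0; apply: xn; apply/mem_set.
  by rewrite /= in_itv /= andbT.
by rewrite max_r ?lee_fin ?ltW // mul0e.
Qed.

Lemma phN (x : R) : ph (- x)%R = ph x.
Proof. by rewrite !phE /gk sqrrN. Qed.

Lemma mid : measurable_fun [set: R] (fun x : R => x%:E).
Proof. by apply/measurable_EFinP. Qed.

Lemma Npos : \int[N]_x ((fun x : R => x%:E)^\+ x) = (ph 0)%:E.
Proof.
rewrite dens; [exact: mu_pos | exact: measurable_funepos mid | by move=> x; exact: funepos_ge0].
Qed.

Lemma Nneg : \int[N]_x ((fun x : R => x%:E)^\- x) = (ph 0)%:E.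
Proof.
rewrite dens; last 2 first.
  exact: measurable_funeneg mid.
  by move=> x; exact: funeneg_ge0.
rewrite -mu_pos -lebN; last 2 first.
- apply: emeasurable_funM; first exact: measurable_funeneg mid.
  by apply/measurable_EFinP; exact: mph.
- by move=> x; apply: mule_ge0; [exact: funeneg_ge0| rewrite lee_fin normal_pdf_ge0].
apply: eq_integral => x _; rewrite funenegE funeposE phN /=.
by rewrite opprK.
Qed.

Lemma Nint : N.-integrable setT (fun x : R => x%:E).
Proof.
apply/integrableP; split; first exact: mid.
have -> : (fun x : R => `|x%:E|) = (fun x => (fun x : R => x%:E)^\+ x + (fun x : R => x%:E)^\- x).
  by apply/funext => x; have := fune_abse (fun x : R => x%:E); move/(congr1 (fun f => f x)).
rewrite ge0_integralD //; do ?[by move=> x _; exact: funepos_ge0 | by move=> x _; exact: funeneg_ge0 | exact: measurable_funepos mid | exact: measurable_funeneg mid].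
by rewrite Npos Nneg -EFinD ltry.
Qed.

Lemma Nmean : \int[N]_x (x%:E) = 0.
Proof. by rewrite integralE Npos Nneg subee. Qed.

Lemma Ntail (a : R) : (0 <= a)%R -> \int[N]_(x in `]a, +oo[) (x%:E) = (ph a)%:E.
Proof.
move=> a0.
have mA : measurable (`]a, +oo[%classic : set R) by [].
rewrite integral_mkcond dens; last 2 first.
- by apply/(measurable_restrictT _ mA); exact: measurable_funTS mid.
- move=> x; rewrite patchE; case: ifPn => // /set_mem /=; rewrite in_itv /= andbT => ax.
  by rewrite lee_fin (le_trans a0 (ltW ax)).
rewrite -(intxph a0) -integral_itv_obnd_cbnd; last first.
  apply/measurable_EFinP; apply: measurable_funM => //; exact: measurable_funTS mph.
rewrite [RHS]integral_mkcond.
apply: eq_integral => x _; rewrite !patchE.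
case: ifPn => _; first by rewrite EFinM.
by rewrite mul0e.
Qed.

Local Notation NN := (N \x N).
Lemma NT : N setT = 1.
Proof. exact: probability_setT. Qed.

Lemma Ncst (c : \bar R) : \int[N]_y c = c.
Proof.
have -> : \int[N]_y c = \int[N]_y (cst c) y by [].
rewrite integral_cst //; change (c * N setT = c); by rewrite NT mule1.
Qed.

Lemma NNT : NN setT = 1.
Proof.
rewrite -setXTT product_measure1E //.
change (N setT * N setT = 1); by rewrite NT mule1.
Qed.

Lemma int1 : NN.-integrable setT (fun z : RR => (z.1)%:E).
Proof.
apply/integrableP; split.
  by apply/measurable_EFinP; exact: measurable_fst.
rewrite fubini_tonelli1 //; last first.
  by apply: measurableT_comp => //; apply/measurable_EFinP; exact: measurable_fst.
rewrite /fubini_F /=.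
under eq_integral do rewrite Ncst.
by move/integrableP: Nint => [].
Qed.

Lemma int2 : NN.-integrable setT (fun z : RR => (z.2)%:E).
Proof.
apply/integrableP; split.
  by apply/measurable_EFinP; exact: measurable_snd.
rewrite fubini_tonelli1 //; last first.
  by apply: measurableT_comp => //; apply/measurable_EFinP; exact: measurable_snd.
rewrite /fubini_F /=.
rewrite Ncst.
by move/integrableP: Nint => [].
Qed.

Definition Dset (a : R) : set RR := [set z | (a < z.1)%R].
Lemma DsetE a : Dset a = `]a, +oo[%classic `*` setT.
Proof.
by apply/seteqP; split => [[x y]|[x y]]; rewrite /Dset /= in_itv /= andbT => -[].
Qed.
Lemma mDset a : measurable (Dset a).
Proof. by rewrite DsetE; apply: measurableX. Qed.

Lemma inD a (x y : R) : ((x, y) \in Dset a) = (a < x)%R.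
Proof. by apply/idP/idP => [/set_mem //|h]; apply/mem_set. Qed.
Lemma inA a (x : R) : (x \in `]a, +oo[%classic) = (a < x)%R.
Proof.
apply/idP/idP => [/set_mem /=|h]; first by rewrite in_itv /= andbT.
by apply/mem_set; rewrite /= in_itv /= andbT.
Qed.

Lemma JD0 a : NN (Dset a) = N `]a, +oo[%classic.
Proof.
rewrite DsetE product_measure1E //.
change (N `]a, +oo[%classic * N setT = N `]a, +oo[%classic); by rewrite NT mule1.
Qed.

Lemma JD1 a : (0 <= a)%R -> \int[NN]_(z in Dset a) (z.1)%:E = (ph a)%:E.
Proof.
move=> a0.
have mf : measurable_fun [set: RR] ((fun z : RR => (z.1)%:E) \_ (Dset a)).
  apply/(measurable_restrictT _ (mDset a)); apply: measurable_funTS.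
  by apply/measurable_EFinP; exact: measurable_fst.
rewrite integral_mkcond fubini_tonelli1 //; last first.
  case=> x y; rewrite patchE inD; case: ifPn => // h.
  by rewrite lee_fin /= (le_trans a0 (ltW h)).
rewrite /fubini_F /=.
transitivity (\int[N]_x (((fun x : R => x%:E) \_ `]a, +oo[%classic) x)).
  apply: eq_integral => x _.
  transitivity (\int[N]_y (((fun x : R => x%:E) \_ `]a, +oo[%classic) x)); last exact: Ncst.
  by apply: eq_integral => y _; rewrite !patchE inD inA.
by rewrite -integral_mkcond Ntail.
Qed.

Lemma JD2 a : \int[NN]_(z in Dset a) (z.2)%:E = 0.
Proof.
have i2 : NN.-integrable setT ((fun z : RR => (z.2)%:E) \_ (Dset a)).
  apply/(integrable_mkcond _ (mDset a)).
  exact: integrableS (mDset a) (subsetT _) int2.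
rewrite integral_mkcond -(integral12_prod_meas1 i2) /fubini_F /=.
transitivity (\int[N]_x (cst (0 : \bar R) x)); last by rewrite integral0.
apply: eq_integral => x _ /=.
have [h|h] := ltP a x.
  by under eq_integral do rewrite patchE inD h; exact: Nmean.
under eq_integral do rewrite patchE inD ltNge h /=.
exact: integral0.
Qed.
Lemma Jval (al be ga a : R) : (0 <= a)%R ->
  \int[NN]_(z in Dset a) ((al + be * z.1 + ga * z.2)%:E) =
  al%:E * N `]a, +oo[%classic + (be * ph a)%:E.
Proof.
move=> a0.
have mD := mDset a.
have i1 : NN.-integrable (Dset a) (fun z : RR => (z.1)%:E).
  exact: integrableS mD (subsetT _) int1.
have i2 : NN.-integrable (Dset a) (fun z : RR => (z.2)%:E).
  exact: integrableS mD (subsetT _) int2.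
have ic : NN.-integrable (Dset a) (fun z : RR => al%:E).
  apply/integrableP; split => //.
  have -> : (fun z : RR => `|al%:E|) = cst `|al%:E| by [].
  rewrite integral_cst //; change (`|al%:E| * NN (Dset a) < +oo); rewrite JD0.
  have Nfin : N `]a, +oo[%classic \is a fin_num by apply: fin_num_measure.
  by rewrite -(fineK Nfin) /= -EFinM ltry.
have i1' := integrableZl mD be i1.
have i2' := integrableZl mD ga i2.
transitivity (\int[NN]_(z in Dset a) ((al%:E + be%:E * (z.1)%:E) + ga%:E * (z.2)%:E)).
  by apply: eq_integral => z _; rewrite -!EFinM -!EFinD.
rewrite integralD //; last exact: integrableD.
rewrite integralD //.
rewrite !integralZl // JD1 // JD2 mule0 adde0.
have -> : \int[NN]_(z in Dset a) al%:E = al%:E * NN (Dset a).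
  by rewrite -integral_cst.
by rewrite JD0 EFinM.
Qed.

Lemma Ntail_prob (a : R) : N `]a, +oo[%classic = (1 - Phi a)%:E.
Proof.
have -> : `]a, +oo[%classic = ~` `]-oo, a]%classic :> set R.
  apply/seteqP; split => x /=; rewrite !in_itv /= ?andbT.
    by move=> h; apply/negP; rewrite -ltNge.
  by move/negP; rewrite -ltNge.
rewrite probability_setC // /Phi.
have Nfin : N `]-oo, a]%classic \is a fin_num by apply: fin_num_measure.
by rewrite EFinB fineK.
Qed.

Lemma Iu_val (mu_u mu_v s_u s_v rho : R) : (mu_u < 0)%R -> (0 < s_u)%R ->
  \int[std_normal2]_(z in [set z | (0 < bnU mu_u s_u z)%R])
     (bnU mu_u s_u z + bnV mu_v s_v rho z)%:E =
  ((mu_u + mu_v) * (1 - Phi (- mu_u / s_u)) +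
   (s_u + s_v * rho) * ph (- mu_u / s_u))%:E.
Proof.
move=> mu0 s0.
set a := (- mu_u / s_u)%R.
have a0 : (0 <= a)%R by rewrite /a divr_ge0 // ?ltW // oppr_gt0.
have -> : [set z | (0 < bnU mu_u s_u z)%R] = Dset a.
  have E : forall x : R, (a < x)%R = (0 < mu_u + s_u * x)%R.
    by move=> x; rewrite /a ltr_pdivrMr //; apply/idP/idP => h; lra.
  by apply/seteqP; split => z /=; rewrite /bnU /Dset /= E.
transitivity (\int[NN]_(z in Dset a)
   (((mu_u + mu_v) + (s_u + s_v * rho) * z.1 + (s_v * Num.sqrt (1 - rho ^+ 2)) * z.2)%:E)).
  by apply: eq_integral => z _; congr (_%:E); rewrite /bnU /bnV; ring.
by rewrite Jval // Ntail_prob -EFinM -EFinD.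
Qed.

Lemma Iv_val (mu_u mu_v s_u s_v rho : R) : (mu_v < 0)%R -> (0 < s_v)%R ->
  (-1 <= rho)%R -> (rho <= 1)%R ->
  \int[std_normal2]_(z in [set z | (0 < bnV mu_v s_v rho z)%R])
     (bnU mu_u s_u z + bnV mu_v s_v rho z)%:E =
  ((mu_u + mu_v) * (1 - Phi (- mu_v / s_v)) +
   (s_u * rho + s_v) * ph (- mu_v / s_v))%:E.
Proof.
move=> mu0 s0 r1 r2.
set b := (- mu_v / s_v)%R.
have b0 : (0 <= b)%R by rewrite /b divr_ge0 // ?ltW // oppr_gt0.
set c := Num.sqrt (1 - rho ^+ 2).
have rc : (rho ^+ 2 + c ^+ 2 = 1)%R.
  rewrite /c sqr_sqrtr; first by ring.
  rewrite subr_ge0; nra.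
pose al := (mu_u + mu_v)%R; pose be := (s_u * rho + s_v)%R; pose ga := (- (s_u * c))%R.
pose h := (fun z : RR => ((al + be * z.1 + ga * z.2)%:E)) \_ (Dset b).
have mh : measurable_fun [set: RR] h.
  apply/(measurable_restrictT _ (mDset b)); apply: measurable_funTS.
  apply/measurable_EFinP; apply: measurable_funD; [apply: measurable_funD|].
  - exact: measurable_cst.
  - by apply: measurable_funM => //; exact: measurable_fst.
  - by apply: measurable_funM => //; exact: measurable_snd.
have E : forall x : R, (b < x)%R = (0 < mu_v + s_v * x)%R.
  by move=> x; rewrite /b ltr_pdivrMr //; apply/idP/idP => hh; lra.
rewrite integral_mkcond.
transitivity (\int[NN]_z h (rot rho c z)).
  apply: eq_integral => z _; rewrite /h !patchE.
  have -> : (z \in [set z | (0 < bnV mu_v s_v rho z)%R]) = (rot rho c z \in Dset b).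
    apply/idP/idP => /set_mem hh; apply/mem_set; move: hh; rewrite /Dset /rot /bnV /= E //.
  case: ifPn => // _; congr (_%:E).
  rewrite /al /be /ga /rot /bnU /bnV /=.
  transitivity (mu_u + mu_v + s_u * (rho ^+ 2 + c ^+ 2) * z.1 + s_v * (rho * z.1 + c * z.2))%R.
    by rewrite rc -/c; ring.
  ring.
rewrite (rotI rc mh) /h -integral_mkcond Jval // Ntail_prob.
by rewrite -EFinM -EFinD.
Qed.

Local Open Scope ring_scope.
Lemma neg_term (A B phv Q rho r1 sv : R) : 0 < phv -> 0 < sv -> rho < r1 ->
  r1 * sv = - A * (Q / phv) - B -> A * Q + (B + sv * rho) * phv < 0.
Proof.
move=> p0 s0 rr e.
have Qe : Q = (Q / phv) * phv by rewrite divfK // gt_eqF.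
set t := Q / phv in e Qe.
rewrite Qe.
have h1 : sv * rho < sv * r1 by rewrite ltr_pM2l.
have h2 : A * t + B + sv * rho < 0.
  rewrite mulrC in e; lra.
have -> : A * (t * phv) + (B + sv * rho) * phv = (A * t + B + sv * rho) * phv by ring.
by rewrite pmulr_llt0.
Qed.

Lemma comb (pu pv X Y : R) : 0 <= pu -> 0 <= pv -> pu + pv = 1 -> X < 0 -> Y < 0 ->
  pu * X + pv * Y < 0.
Proof.
move=> pu0 pv0 s X0 Y0.
have h1 : pu * X <= 0 by rewrite mulr_ge0_le0 // ltW.
have h2 : pv * Y <= 0 by rewrite mulr_ge0_le0 // ltW.
have [pe|pn] := eqVneq pu 0.
  subst pu.
  have -> : pv = 1 by lra.
  by rewrite mul0r add0r mul1r.
have pp : 0 < pu by rewrite lt_def pn.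
have : pu * X < 0 by rewrite pmulr_rlt0.
lra.
Qed.

Lemma ph_gt0 (x : R) : 0 < ph x.
Proof. by rewrite phE mulr_gt0 ?expR_gt0 // normal_peak_gt0 // oner_neq0. Qed.
End S.

Unset Implicit Arguments.

Theorem proposition3 (R : realType) (p_u p_v mu_u mu_v s_u s_v rho : R) :
  0 <= p_u -> 0 <= p_v -> p_u + p_v = 1 ->
  mu_u < 0 -> mu_v < 0 -> 0 < s_u -> 0 < s_v ->
  rho <= 1 -> -1 <= rho -> rho < Num.min (rho1 mu_u mu_v s_u s_v) (rho2 mu_u mu_v s_u s_v) ->
  (perf_g p_u p_v mu_u mu_v s_u s_v rho 0 0 < 0)%E.
Proof.
move=> pu0 pv0 puv mu0 mv0 su0 sv0 r2 r1 rlt.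
move: rlt; rewrite lt_min => /andP[h1 h2].
rewrite /perf_g Iu_val // Iv_val //.
rewrite -!EFinM -EFinD lte_fin.
have mu0' : mu_u != 0 by rewrite lt_eqF.
have mv0' : mu_v != 0 by rewrite lt_eqF.
have su0' : s_u != 0 by rewrite gt_eqF.
have sv0' : s_v != 0 by rewrite gt_eqF.
have X0 : (mu_u + mu_v) * (1 - Phi (- mu_u / s_u)) +
   (s_u + s_v * rho) * normal_pdf 0 1 (- mu_u / s_u) < 0.
  apply: (neg_term (ph_gt0 _) sv0 h1).
  have p0 := ph_gt0 (- mu_u / s_u); have p0' : normal_pdf 0 1 (- mu_u / s_u) != 0 by rewrite gt_eqF.
  by rewrite /rho1 /Mills /phi; field; rewrite p0' sv0' mu0' su0'.
have Y0 : (mu_u + mu_v) * (1 - Phi (- mu_v / s_v)) +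
   (s_u * rho + s_v) * normal_pdf 0 1 (- mu_v / s_v) < 0.
  rewrite (addrC (s_u * rho)).
  apply: (neg_term (ph_gt0 _) su0 h2).
  have p0 := ph_gt0 (- mu_v / s_v); have p0' : normal_pdf 0 1 (- mu_v / s_v) != 0 by rewrite gt_eqF.
  by rewrite /rho2 /Mills /phi; field; rewrite p0' su0' mv0' sv0'.
exact: comb.
Qed.
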